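(* On $\mathbb{R}_+$ let $f_0(x)=e^{-x}$ and $f_c(x)=(x-1)^2e^{-x}$. Then $f_0\succ f_c$.
   Context: Majorization on $\mathbb{R}_+$ (Lebesgue measure): $f\succ g$ means $\int_0^\infty f=\int_0^\infty g$ and $\int_0^\infty[f(x)-t]_+dx\ge\int_0^\infty[g(x)-t]_+dx$ for all $t\ge0$, where $[z]_+=\max(z,0)$. *)

(* Defs.v *)
From HB Require Import structures.
From mathcomp Require Import all_boot all_order all_algebra.
From mathcomp Require Import all_classical all_reals all_analysis.
Set Implicit Arguments. Unset Strict Implicit. Unset Printing Implicit Defensive.
Import Order.TTheory GRing.Theory Num.Theory.
Local Open Scope classical_set_scope.
Local Open Scope ring_scope.

Definition pospart {R : realType} (z : R) : R := Num.max z 0.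

Definition intRplus {R : realType} (f : R -> R) : \bar R :=
  (\int[@lebesgue_measure R]_(x in `[0%R, +oo[) (f x)%:E)%E.

Definition majorizes {R : realType} (f g : R -> R) : Prop :=
  intRplus f = intRplus g /\
  forall t : R, 0 <= t ->
    (intRplus (fun x => pospart (g x - t)) <= intRplus (fun x => pospart (f x - t)))%E.

Definition f0 {R : realType} (x : R) : R := expR (- x).
Definition fc {R : realType} (x : R) : R := (x - 1) ^+ 2 * expR (- x).

(* Main.v *)
Require Import Defs.
From HB Require Import structures.
From mathcomp Require Import all_boot all_order all_algebra.
From mathcomp Require Import all_classical all_reals all_analysis.
From mathcomp Require Import measurable_realfun.
From mathcomp Require Import ring lra.
Set Implicit Arguments. Unset Strict Implicit. Unset Printing Implicit Defensive.
Import Order.TTheory GRing.Theory Num.Theory.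
Import numFieldNormedType.Exports.
Local Open Scope classical_set_scope.
Local Open Scope ring_scope.

Section S.
Variable R : realType.

Lemma is_derive_expN (x : R) : is_derive x 1 (fun y => expR (- y)) (- expR (- x)).
Proof.
have -> : (fun y : R => expR (- y)) = expR \o -%R by [].
have h : is_derive x 1 (expR \o -%R) (expR (- x) * -1).
  exact: is_derive1_comp.
by rewrite mulrN1 in h.
Qed.

Definition Fc (x : R) : R := - ((x ^+ 2 + 1) * expR (- x)).

Lemma is_derive_sq1 (x : R) : is_derive x 1 (fun y : R => y ^+ 2 + 1) (2 * x).
Proof.
have h : is_derive x 1 ((@idfun R) ^+ 2 + cst 1) ((2%:R * x ^+ 1) *: (1:R) + (0:R)).
  by apply: is_deriveD.
by rewrite scaler1 addr0 expr1 in h.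
Qed.

Lemma isdM (f g : R -> R) (x df dg : R) : is_derive x 1 f df -> is_derive x 1 g dg ->
  is_derive x (1:R) (fun y => f y * g y) (f x * dg + g x * df).
Proof. move=> hf hg. exact: (is_deriveM hf hg). Qed.

Lemma isdN (f : R -> R) (x df : R) : is_derive x 1 f df ->
  is_derive x (1:R) (fun y => - f y) (- df).
Proof. move=> hf. exact: (is_deriveN hf). Qed.

Lemma isdD (f g : R -> R) (x df dg : R) : is_derive x 1 f df -> is_derive x 1 g dg ->
  is_derive x (1:R) (fun y => f y + g y) (df + dg).
Proof. move=> hf hg. exact: (is_deriveD hf hg). Qed.

Lemma is_derive_Fc (x : R) : is_derive x 1 Fc (fc x).
Proof.
apply: is_derive_eq.
rewrite /fc /GRing.scale /=. ring.
Qed.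

Notation mu := (@lebesgue_measure R).

Lemma isd_cont (F : R -> R) (f : R -> R) :
  (forall x : R, is_derive x (1:R) F (f x)) -> continuous F.
Proof.
move=> dF x; apply: differentiable_continuous.
apply/derivable1_diffP; exact: (@ex_derive _ _ _ _ _ _ _ (dF x)).
Qed.

Lemma isd_derive1 (F : R -> R) (f : R -> R) (x : R) :
  (forall x : R, is_derive x (1:R) F (f x)) -> (F^`())%classic x = f x.
Proof. by move=> dF; rewrite derive1E derive_val. Qed.

Lemma FTCy (f F : R -> R) (a : R) :
  (forall x, a <= x -> 0 <= f x) -> continuous f ->
  (forall x : R, is_derive x (1:R) F (f x)) -> F x @[x --> +oo] --> 0 ->
  (\int[mu]_(x in `[a, +oo[) (f x)%:E = (- F a)%:E)%E.
Proof.
move=> f0 cf dF Fl.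
rewrite (@ge0_continuous_FTC2y _ f F a 0) //.
all: try by rewrite sub0e EFinN.
all: try exact: continuous_subspaceT.
all: try by move=> x _; exact: isd_derive1.
all: try by apply: cvg_at_right_filter; exact: isd_cont dF a.
all: try by move=> x _; exact: ex_derive (dF x).
Qed.

Lemma FTCcc (f F : R -> R) (a b : R) : a < b -> continuous f ->
  (forall x : R, is_derive x (1:R) F (f x)) ->
  (\int[mu]_(x in `[a, b]) (f x)%:E = (F b - F a)%:E)%E.
Proof.
move=> ab cf dF.
rewrite EFinB.
apply: continuous_FTC2 => //.
- exact: continuous_subspaceT.
- split.
  + by move=> x _; exact: (@ex_derive _ _ _ _ _ _ _ (dF x)).
  + by apply: cvg_at_right_filter; exact: isd_cont dF a.
  + by apply: cvg_at_left_filter; exact: isd_cont dF b.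
- by move=> x _; exact: isd_derive1.
Qed.

Lemma cvg_invy : (fun x : R => x^-1) x @[x --> +oo] --> 0.
Proof.
have h := @gtr0_cvgV0 R _ (pinfty_nbhs R) _ (fun x : R => x).
apply/h; first by near=> x.
exact: cvg_id.
Unshelve. all: by end_near.
Qed.

Lemma cvg_Fc : Fc x @[x --> +oo] --> 0.
Proof.
rewrite -oppr0.
have -> : Fc = (fun x => - ((x ^+ 2 + 1) * expR (- x))) by [].
apply: cvgN.
apply: (@squeeze_cvgr _ _ _ _ (cst 0) (fun x => 12 * x^-1)).
- near=> x.
  have x1 : 1 <= x by near: x; exact: nbhs_pinfty_ge.
  have x0 : 0 < x by lra.
  apply/andP; split; first by rewrite mulr_ge0 // ?expR_ge0 // addr_ge0 // sqr_ge0.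
  have he := @expR_ge1Dxn R x 2 (ltW x0).
  have ep := expR_gt0 x.
  rewrite expRN.
  have e6 : (2.+1`!)%:R = 6 :> R by [].
  rewrite e6 in he.
  rewrite -ler_pdivrMr ?invr_gt0 // invrK.
  rewrite mulrAC ler_pdivrMr //.
  have -> : x ^+ 2 = x * x by rewrite expr2.
  have e3 : x ^+ 3 = x * x * x by rewrite !exprS expr0 mulr1 mulrA.
  rewrite e3 in he.
  nra.
- exact: cvg_cst.
- rewrite -(mulr0 12). apply: cvgM; [exact: cvg_cst | exact: cvg_invy].
Unshelve. all: by end_near.
Qed.

Lemma mE (h : R -> R) (D : set R) : measurable_fun setT h ->
  measurable_fun D (fun x => (h x)%:E).
Proof. by move=> mh; apply/measurable_EFinP; exact: measurable_funTS. Qed.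

Lemma mcont (h : R -> R) : continuous h -> measurable_fun setT h.
Proof. exact: continuous_measurable_fun. Qed.

Lemma mpos (g : R -> R) (t : R) : measurable_fun setT g ->
  measurable_fun setT (fun x => pospart (g x - t)).
Proof.
move=> mg.
have -> : (fun x => pospart (g x - t)) = (fun x => g x - t) \max (cst 0) by [].
apply: measurable_maxr => //.
apply: measurable_funB => //.
Qed.

Lemma split_y (h : R -> R) (a b : R) : a <= b -> measurable_fun setT h ->
  (forall x, a <= x -> 0 <= h x) ->
  (\int[mu]_(x in `[a, +oo[) (h x)%:E =
   \int[mu]_(x in `[a, b]) (h x)%:E + \int[mu]_(x in `[b, +oo[) (h x)%:E)%E.
Proof.
move=> ab mh h0.
rewrite -(integral_itv_obnd_cbnd (r:=b)); last exact: mE.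
rewrite (@itv_bndbnd_setU _ _ (BLeft a) (BRight b) +oo%O); last 2 first.
- by rewrite bnd_simp.
- by [].
rewrite ge0_integral_setU //=.
- exact: mE.
- move=> x; rewrite /= !in_itv /= => -[/andP[ax _]|/andP[bx _]]; rewrite lee_fin.
    exact: h0.
  by apply: h0; lra.
- rewrite disj_set2E; apply/eqP/seteqP; split => x //=.
  rewrite !in_itv /= => -[/andP[_ xb] /andP[bx _]]; lra.
Qed.

Lemma is_derive_fc (x : R) : is_derive x (1:R) fc (2 * (x - 1) * expR (- x) - (x - 1) ^+ 2 * expR (- x)).
Proof. apply: is_derive_eq. rewrite /GRing.scale /=. ring. Qed.

Lemma fc_cont : continuous (@fc R).
Proof. exact: isd_cont is_derive_fc. Qed.

Lemma f0_cont : continuous (@f0 R).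
Proof. exact: isd_cont is_derive_expN. Qed.

Lemma fc_ge0 (x : R) : 0 <= fc x.
Proof. by rewrite /fc mulr_ge0 ?expR_ge0 ?sqr_ge0. Qed.

Lemma int_cc (c d a b : R) : a < b ->
  (\int[mu]_(x in `[a, b]) (c * fc x - d)%:E = (c * (Fc b - Fc a) - d * (b - a))%:E)%E.
Proof.
move=> ab.
have cf : continuous (fun x => c * fc x - d).
  move=> x; apply: cvgB; last exact: cvg_cst.
  apply: cvgM; [exact: cvg_cst | exact: fc_cont].
have dF : forall x : R, is_derive x (1:R) (fun x => c * Fc x - d * x) (c * fc x - d).
  move=> x.
  have h := is_derive_Fc x.
  by apply: is_derive_eq; rewrite /GRing.scale /= mulr1.
rewrite (FTCcc ab cf dF); congr (_%:E); ring.
Qed.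

Lemma int_y (c a : R) : 0 <= c ->
  (\int[mu]_(x in `[a, +oo[) (c * fc x)%:E = (- (c * Fc a))%:E)%E.
Proof.
move=> c0.
have cf : continuous (fun x => c * fc x).
  move=> x; apply: cvgM; [exact: cvg_cst | exact: fc_cont].
have dF : forall x : R, is_derive x (1:R) (fun x => c * Fc x) (c * fc x).
  move=> x.
  have h := is_derive_Fc x.
  by apply: is_derive_eq; rewrite /GRing.scale /=.
rewrite (FTCy _ cf dF) //.
- by move=> x _; rewrite mulr_ge0 // fc_ge0.
- rewrite -(mulr0 c); apply: cvgM; [exact: cvg_cst | exact: cvg_Fc].
Qed.

Lemma int_f0 : intRplus (@f0 R) = 1%E.
Proof.
have dF : forall x : R, is_derive x (1:R) (fun x => - expR (- x)) (f0 x).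
  move=> x; apply: is_derive_eq; rewrite /f0 /GRing.scale /=. ring.
rewrite /intRplus (FTCy _ f0_cont dF).
- by rewrite oppr0 expR0 opprK.
- by move=> x _; rewrite /f0 expR_ge0.
- rewrite -oppr0; apply: cvgN; exact: cvgr_expR.
Qed.

Lemma int_fc_tail (a : R) :
  (\int[mu]_(x in `[a, +oo[) (fc x)%:E = (- Fc a)%:E)%E.
Proof.
have := int_y a (@ler01 R).
rewrite mul1r => <-.
by apply: eq_integral => x _; rewrite mul1r.
Qed.

Lemma int_fc : intRplus (@fc R) = 1%E.
Proof.
rewrite /intRplus int_fc_tail /Fc oppr0 expR0 opprK mulr1.
by rewrite expr0n /= add0r.
Qed.

Lemma pos_id (z : R) : 0 <= z -> pospart z = z.
Proof. by move=> z0; rewrite /pospart max_l. Qed.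

Lemma pos_0 (z : R) : z <= 0 -> pospart z = 0.
Proof. by move=> z0; rewrite /pospart max_r. Qed.

Lemma pos_ge0 (z : R) : 0 <= pospart z.
Proof. by rewrite /pospart le_max lexx orbT. Qed.

Lemma pos_le (z w : R) : z <= w -> 0 <= w -> pospart z <= w.
Proof. by move=> zw w0; rewrite /pospart ge_max zw w0. Qed.

Lemma pos_mono (z w : R) : z <= w -> pospart z <= pospart w.
Proof.
move=> zw; rewrite /pospart ge_max; apply/andP; split.
  by rewrite le_max zw.
by rewrite le_max lexx orbT.
Qed.

Lemma RHS_lb (t : R) : 0 < t < 1 ->
  ((1 - t + t * ln t)%:E <= intRplus (fun x => pospart (f0 x - t)))%E.
Proof.
move=> /andP[t0 t1].
set L := - ln t.
have L0 : 0 < L by rewrite /L oppr_gt0 ln_lt0 // t0 t1.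
have eL : expR (- L) = t by rewrite /L opprK lnK // posrE.
have mh : measurable_fun setT (fun x => pospart (f0 x - t)).
  by apply: mpos; exact: mcont f0_cont.
rewrite /intRplus.
have H : (\int[mu]_(x in `[0%R, L]) (pospart (f0 x - t))%:E <=
    \int[mu]_(x in `[0%R, +oo[) (pospart (f0 x - t))%:E)%E.
  apply: ge0_subset_integral => //.
  - exact: mE.
  - by move=> x _; rewrite lee_fin pos_ge0.
  - by apply: subset_itvl; rewrite bnd_simp.
apply: le_trans H.
have -> : (\int[mu]_(x in `[0%R, L]) (pospart (f0 x - t))%:E =
          \int[mu]_(x in `[0%R, L]) (f0 x - t)%:E)%E.
  apply: eq_integral => x; rewrite inE /= in_itv /= => /andP[x0 xL].
  rewrite pos_id // subr_ge0 -eL /f0 ler_expR; lra.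
have dF : forall x : R, is_derive x (1:R) (fun x => - expR (- x) - t * x) (f0 x - t).
  move=> x; apply: is_derive_eq; rewrite /f0 /GRing.scale /=. ring.
have cf : continuous (fun x => f0 x - t).
  move=> x; apply: cvgB; [exact: f0_cont | exact: cvg_cst].
rewrite (FTCcc L0 cf dF) lee_fin eL oppr0 expR0 /L.
lra.
Qed.

Lemma fc_le_f0 (x : R) : 0 <= x <= 2 -> fc x <= f0 x.
Proof.
move=> /andP[x0 x2]; rewrite /fc /f0.
rewrite -[leRHS]mul1r ler_pM2r ?expR_gt0 //.
rewrite expr2; nra.
Qed.

Lemma f0_le1 (x : R) : 0 <= x -> f0 x <= 1.
Proof. by move=> x0; rewrite /f0 expR_le1 oppr_le0. Qed.

Lemma fc_leM (x : R) : 1 <= x -> fc x <= 4 * expR (- 3).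
Proof.
move=> x1.
have h := expR_ge1Dx ((x - 3) / 2).
have hu : 0 <= 1 + (x - 3) / 2 by lra.
have h2 : (1 + (x - 3) / 2) ^+ 2 <= expR ((x - 3) / 2) ^+ 2.
  by rewrite lerXn2r // ?nnegrE // (le_trans hu h).
rewrite -expRM_natr in h2.
have e2 : (x - 3) / 2 * 2%:R = x - 3 by field.
rewrite e2 in h2.
rewrite /fc.
have e : expR (- 3) = expR (x - 3) * expR (- x) by rewrite -expRD; congr expR; ring.
rewrite e.
have ep := expR_gt0 (- x).
have -> : (x - 1) ^+ 2 = 4 * (1 + (x - 3) / 2) ^+ 2 by field.
rewrite -mulrA ler_pM2l //.
by rewrite ler_pM2r.
Qed.

Lemma fc_mono (x z : R) : 3 <= x -> x <= z -> fc z <= fc x.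
Proof.
move=> x3 xz.
set s := z - x.
have h := expR_ge1Dx (s / 2).
have ha : z - 1 <= (x - 1) * expR (s / 2).
  apply: (le_trans _ (ler_wpM2l _ h)); last lra.
  rewrite /s; nra.
have h2 : (z - 1) ^+ 2 <= ((x - 1) * expR (s / 2)) ^+ 2.
  rewrite lerXn2r // ?nnegrE //; lra.
rewrite exprMn -expRM_natr in h2.
have e2 : s / 2 * 2%:R = s by field.
rewrite e2 in h2.
rewrite /fc.
have e : expR (- x) = expR s * expR (- z) by rewrite -expRD; congr expR; rewrite /s; ring.
rewrite e mulrA ler_pM2r ?expR_gt0 //.
Qed.

Lemma fc_lb (p x : R) : 0 <= p -> 1 + p <= x -> x <= 3 -> p ^+ 2 * expR (- 3) <= fc x.
Proof.
move=> p0 px x3; rewrite /fc.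
apply: ler_pM.
- by rewrite sqr_ge0.
- by rewrite expR_ge0.
- rewrite lerXn2r // ?nnegrE //; lra.
- rewrite ler_expR; lra.
Qed.

Lemma E_lo : 50 / 19 <= expR (1 : R).
Proof.
have h := expR_ge1Dx (1 / 16 : R).
have e : expR (1:R) = expR (1 / 16) ^+ 16.
  by rewrite -expRM_natr; congr expR; field.
rewrite e.
set y := expR (1 / 16 : R).
have y0 : 17 / 16 <= y by rewrite /y; lra.
have h1 : 289 / 256 <= y ^+ 2 by rewrite expr2; nra.
have h2 : 121 / 95 <= y ^+ 4.
  have -> : y ^+ 4 = y ^+ 2 * y ^+ 2 by rewrite -exprD.
  nra.
have h3 : 73 / 45 <= y ^+ 8.
  have -> : y ^+ 8 = y ^+ 4 * y ^+ 4 by rewrite -exprD.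
  nra.
have -> : y ^+ 16 = y ^+ 8 * y ^+ 8 by rewrite -exprD.
nra.
Qed.

Lemma E_hi : expR (1 : R) <= 144 / 49.
Proof.
have h := expR_ge1Dx (- (1 / 8) : R).
have e : expR (1:R) = (expR (- (1 / 8)))^-1 ^+ 8.
  by rewrite -expRN opprK -expRM_natr; congr expR; field.
rewrite e.
set y := expR (- (1 / 8) : R).
have y0 : 0 < y by rewrite /y expR_gt0.
have hy : y^-1 <= 8 / 7.
  rewrite -[8 / 7]invf_div lef_pV2 ?posrE // /y; lra.
have yi0 : 0 <= y^-1 by rewrite invr_ge0 ltW.
have h2 : y^-1 ^+ 2 <= 17 / 13 by rewrite expr2; nra.
have h20 : 0 <= y^-1 ^+ 2 by rewrite exprn_ge0.
have h4 : y^-1 ^+ 4 <= 12 / 7.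
  have -> : y^-1 ^+ 4 = y^-1 ^+ 2 * y^-1 ^+ 2 by rewrite -exprD.
  nra.
have h40 : 0 <= y^-1 ^+ 4 by rewrite exprn_ge0.
have -> : y^-1 ^+ 8 = y^-1 ^+ 4 * y^-1 ^+ 4 by rewrite -exprD.
nra.
Qed.

Lemma le_int (D : set R) (g h : R -> R) : measurable D ->
  measurable_fun setT g -> measurable_fun setT h ->
  (forall x, D x -> 0 <= g x) -> (forall x, D x -> g x <= h x) ->
  (\int[mu]_(x in D) (g x)%:E <= \int[mu]_(x in D) (h x)%:E)%E.
Proof.
move=> mD mg mh g0 gh.
apply: ge0_le_integral => //.
all: try exact: mE.
all: try by move=> x Dx; rewrite lee_fin g0.
all: try by move=> x Dx; rewrite lee_fin gh.
Qed.

Lemma mfc : measurable_fun setT (@fc R).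
Proof. exact: mcont fc_cont. Qed.

Lemma mf0 : measurable_fun setT (@f0 R).
Proof. exact: mcont f0_cont. Qed.

Lemma regC (t : R) : 4 * expR (- 3) <= t ->
  (intRplus (fun x => pospart (fc x - t)) <= intRplus (fun x => pospart (f0 x - t)))%E.
Proof.
move=> tM.
apply: le_int => //.
- exact: mpos mfc.
- exact: mpos mf0.
- by move=> x _; exact: pos_ge0.
- move=> x; rewrite /= in_itv /= andbT => x0.
  have [x2|x2] := lerP x 2.
    by apply: pos_mono; rewrite lerD2r fc_le_f0 // x0 x2.
  rewrite pos_0 ?pos_ge0 // subr_le0 (le_trans _ tM) // fc_leM //; lra.
Qed.

Lemma pos_scale (y t c G : R) : 0 <= y -> y <= G -> 0 <= t -> 0 < G -> 0 <= c ->
  c * G = G - t -> pospart (y - t) <= c * y.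
Proof.
move=> y0 yG t0 G0 c0 e.
apply: pos_le; last by rewrite mulr_ge0.
have c1 : c <= 1.
  have : c * G <= 1 * G by rewrite e mul1r; lra.
  by rewrite ler_pM2r.
nra.
Qed.

Lemma M_le1 : 4 * expR (- 3) <= (1 : R).
Proof.
have h := expR_ge1Dx (3 : R).
have e : expR (- 3 : R) = (expR 3)^-1 by rewrite expRN.
rewrite e -[4 * _]/(4 / expR 3) ler_pdivrMr ?expR_gt0 //; lra.
Qed.

Definition P (t x : R) := pospart (fc x - t).

Lemma mP t : measurable_fun setT (P t).
Proof. exact: mpos mfc. Qed.

Lemma P0 t x : 0 <= P t x.
Proof. exact: pos_ge0. Qed.

Lemma piece_cc (t c d a b : R) : a < b ->
  (forall x, a <= x <= b -> P t x <= c * fc x - d) ->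
  (\int[mu]_(x in `[a, b]) (P t x)%:E <= (c * (Fc b - Fc a) - d * (b - a))%:E)%E.
Proof.
move=> ab hb.
rewrite -int_cc //.
apply: le_int => //.
all: try exact: mP.
all: try by move=> x _; exact: P0.
all: try by move=> x; rewrite /= in_itv /=; exact: hb.
apply: measurable_funB => //; apply: measurable_funM => //; exact: mfc.
Qed.

Lemma piece_y (t c a : R) : 0 <= c ->
  (forall x, a <= x -> P t x <= c * fc x) ->
  (\int[mu]_(x in `[a, +oo[) (P t x)%:E <= (- (c * Fc a))%:E)%E.
Proof.
move=> c0 hb.
rewrite -int_y //.
apply: le_int => //.
all: try exact: mP.
all: try by move=> x _; exact: P0.
all: try by move=> x; rewrite /= in_itv /= andbT; exact: hb.
apply: measurable_funM => //; exact: mfc.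
Qed.

Lemma regB (t : R) : 0 <= t -> t <= 4 * expR (- 3) ->
  (intRplus (P t) <= ((1 - t) * (Fc 1 - Fc 0) - 0 * (1 - 0)
       + - ((1 - t / (4 * expR (- 3))) * Fc 1))%:E)%E.
Proof.
move=> t0 tM.
have M0 : 0 < 4 * expR (- 3 : R) by rewrite mulr_gt0 ?expR_gt0.
have t1 := le_trans tM M_le1.
rewrite /intRplus (@split_y _ 0 1) //; last 2 first.
- exact: mP.
- by move=> x _; exact: P0.
rewrite EFinD; apply: leeD.
- apply: piece_cc => // x /andP[x0 x1].
  rewrite subr0; apply: (@pos_scale _ _ _ 1) => //.
  + exact: fc_ge0.
  + apply: (le_trans (fc_le_f0 _)); first by rewrite x0 /=; lra.
    exact: f0_le1.
  + lra.
  + lra.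
- apply: piece_y.
  + rewrite subr_ge0 ler_pdivrMr // mul1r //.
  + move=> x x1; apply: (@pos_scale _ _ _ (4 * expR (- 3))) => //.
    * exact: fc_ge0.
    * exact: fc_leM.
    * rewrite subr_ge0 ler_pdivrMr // mul1r //.
    * by rewrite mulrBl mul1r divfK // gt_eqF.
Qed.

Lemma regA (t p q : R) : 0 < t -> 0 < p -> p <= 2 -> 2 <= q -> p < q ->
  t <= p ^+ 2 * expR (- 3) -> t <= fc (1 + q) ->
  (intRplus (P t) <= ((1 - t) * (Fc 1 - Fc 0) - 0 * (1 - 0)
     + ((1 * (Fc (1 + p) - Fc 1) - 0 * (1 + p - 1))
     + ((1 * (Fc (1 + q) - Fc (1 + p)) - t * (1 + q - (1 + p)))
     + - ((1 - t / fc (1 + q)) * Fc (1 + q)))))%:E)%E.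
Proof.
move=> t0 p0 p2 q2 pq tT tG.
have G0 : 0 < fc (1 + q) by apply: (lt_le_trans t0).
have t1 : t <= 1 by apply: (le_trans tG); apply: (le_trans (fc_leM _)); [lra | exact: M_le1].
rewrite /intRplus (@split_y _ 0 1) //; last 2 first.
- exact: mP.
- by move=> x _; exact: P0.
rewrite EFinD; apply: leeD.
  apply: piece_cc => // x /andP[x0 x1].
  rewrite subr0; apply: (@pos_scale _ _ _ 1) => //.
  + exact: fc_ge0.
  + apply: (le_trans (fc_le_f0 _)); first by rewrite x0 /=; lra.
    exact: f0_le1.
  + lra.
  + lra.
  + by rewrite mulr1.
rewrite (@split_y _ 1 (1 + p)) //; last 3 first.
- lra.
- exact: mP.
- by move=> x _; exact: P0.
rewrite EFinD; apply: leeD.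
  apply: piece_cc => //; first lra.
  move=> x _; rewrite mul1r subr0; apply: pos_le; first lra.
  exact: fc_ge0.
rewrite (@split_y _ (1 + p) (1 + q)) //; last 3 first.
- lra.
- exact: mP.
- by move=> x _; exact: P0.
rewrite EFinD; apply: leeD.
  apply: piece_cc => //; first lra.
  move=> x /andP[px xq]; rewrite mul1r; apply: pos_le => //.
  rewrite subr_ge0.
  have [x3|x3] := lerP x 3.
    exact: le_trans tT (fc_lb (ltW p0) px x3).
  apply: (le_trans tG); apply: fc_mono => //; lra.
apply: piece_y.
  rewrite subr_ge0 ler_pdivrMr // mul1r //.
move=> x xq; apply: (@pos_scale _ _ _ (fc (1 + q))) => //.
- exact: fc_ge0.
- apply: fc_mono => //; lra.
- exact: ltW.
- rewrite subr_ge0 ler_pdivrMr // mul1r //.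
- by rewrite mulrBl mul1r divfK // gt_eqF.
Qed.

Lemma Fc0 : Fc 0 = -1 :> R.
Proof. by rewrite /Fc oppr0 expR0 expr0n /= add0r mulr1. Qed.

Lemma Fc1 : Fc 1 = - (2 * expR (- 1)) :> R.
Proof. by rewrite /Fc expr1n. Qed.

Lemma e3 : expR (- 3) = expR (- 1) ^+ 3 :> R.
Proof. by rewrite -expRM_natr; congr expR; rewrite mulN1r. Qed.

Lemma e1_bnd : 17 / 50 <= expR (- 1 : R) <= 19 / 50.
Proof.
have lo := E_lo; have hi := E_hi.
have E0 : 0 < expR (1 : R) by exact: expR_gt0.
rewrite expRN; apply/andP; split.
- rewrite -[17 / 50]invf_div lef_pV2; [lra | rewrite posrE; lra | rewrite posrE; lra].
- rewrite -[19 / 50]invf_div lef_pV2; [lra | rewrite posrE; lra | rewrite posrE; lra].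
Qed.

End S.




Lemma numA1 (R : realType) (e1 p : R) : 17 / 50 <= e1 -> e1 <= 19 / 50 ->
  p = 2 - 2 * e1 -> p ^+ 2 <= 7 / 4.
Proof.
move=> h1 h2 ->.
have a : 0 <= 2 - 2 * e1 by lra.
have b : 2 - 2 * e1 <= 33 / 25 by lra.
apply: (le_trans (y := (33 / 25) ^+ 2)).
  rewrite lerXn2r // ?nnegrE; lra.
rewrite expr2; lra.
Qed.

Lemma numA2 (R : realType) (e1 q : R) : 17 / 50 <= e1 -> 13 / 4 <= q ->
  1 <= q ^+ 2 * (e1 * e1).
Proof.
move=> h1 h2.
have h : 1 <= q * e1 by nra.
rewrite expr2 mulrACA.
have h0 : 0 <= q * e1 by lra.
nra.
Qed.

Lemma numA3 (R : realType) (q : R) : 0 <= q -> q * q <= (1 + q) * (1 + q) + 1.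
Proof. move=> q0; nra. Qed.

Lemma numA4 (R : realType) (t e1 L A B Y : R) : Y <= - t ->
  (1 - t) * (- (2 * e1) - -1) - 0 * (1 - 0) +
  (1 * (B - - (2 * e1)) - 0 * (1 + (2 - 2 * e1) - 1) +
   (1 * (A - B) - t * (1 + (1 + L) - (1 + (2 - 2 * e1))) + - (A - Y)))
  <= 1 - t + t * - L.
Proof. move=> hY; nra. Qed.

Lemma numB1 (R : realType) (e1 p : R) : e1 <= 19 / 50 ->
  p = 2 - 2 * e1 -> 3 / 2 <= p ^+ 2.
Proof.
move=> h ->.
apply: (le_trans (y := (31 / 25) ^+ 2)).
  rewrite expr2; lra.
rewrite lerXn2r // ?nnegrE; lra.
Qed.

Lemma numB2 (R : realType) (L p2 : R) : 3 / 2 <= p2 ->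
  p2 * (1 + (L - 3)) < 1 -> L <= 8 / 3.
Proof. move=> h1 h2; nra. Qed.

Lemma numB3 (R : realType) (e1 L : R) : 0 <= e1 -> e1 <= 19 / 50 -> L <= 8 / 3 ->
  2 * e1 ^+ 2 * (2 * e1 + L) <= 1.
Proof.
move=> h0 h1 h2.
have a : e1 * e1 <= (19 / 50) * (19 / 50) by nra.
have c : 0 <= e1 * e1 by nra.
have b : e1 * e1 * e1 <= (19 / 50) * (19 / 50) * (19 / 50) by nra.
rewrite !expr2 mulrDr.
nra.
Qed.

Lemma numB4 (R : realType) (t e1 L Z : R) : t * (2 * e1 + L) <= Z ->
  (1 - t) * (- (2 * e1) - -1) - 0 * (1 - 0) + (2 * e1 - Z) <= 1 - t + t * - L.
Proof. move=> h; nra. Qed.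

Theorem mainTheorem8 (R : realType) : majorizes (@f0 R) (@fc R).
Proof.
split; first by rewrite int_f0 int_fc.
move=> t; rewrite le_eqVlt => /predU1P[<-|t0].
  have -> : intRplus (fun x : R => pospart (fc x - 0)) = intRplus (@fc R).
    by congr intRplus; apply/funext => x; rewrite subr0 pos_id // fc_ge0.
  have -> : intRplus (fun x : R => pospart (f0 x - 0)) = intRplus (@f0 R).
    by congr intRplus; apply/funext => x; rewrite subr0 pos_id // /f0 expR_ge0.
  by rewrite int_f0 int_fc.
have [tM|tM] := leP (4 * expR (- 3)) t.
  exact: regC.
have t1 : t < 1 := lt_le_trans tM (@M_le1 R).
change (intRplus (P t) <= intRplus (fun x : R => pospart (f0 x - t)))%E.
have HR := @RHS_lb R t (introT andP (conj t0 t1)).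
suff HL : (intRplus (P t) <= (1 - t + t * ln t)%:E)%E by exact: le_trans HL HR.
set L := - ln t.
have eL : expR (- L) = t by rewrite /L opprK lnK // posrE.
have lnt : ln t = - L by rewrite /L opprK.
have eL2 : t * expR L = 1 by rewrite -eL mulrC expRxMexpNx_1.
have /andP[e1lo e1hi] := @e1_bnd R.
have E3 : 0 < expR (3 : R) by exact: expR_gt0.
have EL : 0 < expR L by exact: expR_gt0.
have e30 : 0 < expR (- 3 : R) by exact: expR_gt0.
set e1 := expR (- 1 : R).
move: e1lo e1hi; rewrite -/e1 => e1lo e1hi.
have e10 : 0 < e1 by rewrite /e1 expR_gt0.
set p := 2 - 2 * e1.
have [tT|tT] := leP t (p ^+ 2 * expR (- 3)).
  set q := 1 + L.
  have hL : 4 - p ^+ 2 <= L.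
    have h := expR_ge1Dx (3 - L).
    have : expR (3 - L) = expR 3 * t by rewrite expRD eL.
    have : expR 3 * t <= expR 3 * (p ^+ 2 * expR (- 3)) by rewrite ler_pM2l.
    rewrite mulrCA expRxMexpNx_1 mulr1.
    lra.
  have hp2 : p ^+ 2 <= 7 / 4 by exact: (numA1 e1lo e1hi).
  have hq : 13 / 4 <= q by rewrite /q; lra.
  have hG : t <= fc (1 + q).
    rewrite /fc.
    have -> : expR (- (1 + q)) = e1 * e1 * t.
      by rewrite -eL /e1 -!expRD /q; congr expR; ring.
    have -> : 1 + q - 1 = q by ring.
    rewrite mulrA; apply: ler_peMl; first exact: ltW.
    exact: numA2.
  have pA : 0 < p by rewrite /p; lra.
  have pB : p <= 2 by rewrite /p; lra.
  have pC : 2 <= q by lra.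
  have pD : p < q by rewrite /p; lra.
  have H := regA t0 pA pB pC pD tT hG.
  apply: (le_trans H).
  rewrite lee_fin Fc0 Fc1 -/e1 lnt.
  have G0 : 0 < fc (1 + q) by apply: (lt_le_trans t0).
  have AG : Fc (1 + q) <= - fc (1 + q).
    rewrite /Fc /fc.
    have w0 := expR_gt0 (- (1 + q)).
    have -> : 1 + q - 1 = q by ring.
    rewrite lerN2 ler_pM2r // expr2 expr2.
    apply: numA3; lra.
  have hX : t / fc (1 + q) * Fc (1 + q) <= - t.
    rewrite mulrAC -mulrA.
    have h : Fc (1 + q) / fc (1 + q) <= -1 by rewrite ler_pdivrMr // mulN1r.
    by rewrite -(ler_pM2l t0) mulrN1 in h.
  apply: (le_trans (y := 1 - t * L + t / fc (1 + q) * Fc (1 + q))); last lra.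
  rewrite le_eqVlt; apply/orP; left; apply/eqP.
  rewrite /p /q /L.
  ring.
have hp2 : 3 / 2 <= p ^+ 2 by exact: (numB1 e1hi).
have hL : L <= 8 / 3.
  have h := expR_ge1Dx (L - 3).
  have : expR (L - 3) = expR L * expR (- 3) by rewrite expRD.
  have : p ^+ 2 * expR (- 3) * expR L < t * expR L by rewrite ltr_pM2r.
  rewrite eL2 => h2 h3.
  have h4 : p ^+ 2 * expR (L - 3) < 1.
    by rewrite h3 [expR L * _]mulrC mulrA.
  apply: (numB2 hp2).
  apply: le_lt_trans h4.
  by rewrite ler_pM2l //; lra.
have HB := regB (ltW t0) (ltW tM).
apply: (le_trans HB).
rewrite lee_fin Fc0 Fc1 e3 -/e1 lnt.
have hz : t / (4 * e1 ^+ 3) * (2 * e1) = t / (2 * e1 ^+ 2).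
  by field; rewrite ?expf_neq0 ?gt_eqF.
have hk : 2 * e1 ^+ 2 * (2 * e1 + L) <= 1.
  by apply: numB3 => //; exact: ltW.
have hZ : t * (2 * e1 + L) <= t / (2 * e1 ^+ 2).
  rewrite ler_pdivlMr; last by rewrite mulr_gt0 // exprn_gt0.
  by rewrite -mulrA -[leRHS]mulr1 ler_pM2l // mulrC.
apply: (le_trans (y := 1 - t + 2 * t * e1 - t / (4 * e1 ^+ 3) * (2 * e1))).
  rewrite le_eqVlt; apply/orP; left; apply/eqP.
  ring.
rewrite hz.
move: hZ; clear.
move=> hZ; nra.
Qed.
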